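(* Let $p$ be a prime and $k\ge0$ an integer; put $f=2$ if $p=2$ and $f=1$ if $p>2$, and $d=f\cdot p^{2k}$. Let $r$ be a positive integer with $r\ge\lceil\sqrt{f d/2}\,\rceil$ such that, if $d>1$, then $p\nmid r$. Put $n=p^k r$ and $$a=2n+d=2p^kr+f p^{2k},\qquad b=2n+\frac{2n^2}{d}=2p^kr+\frac{2r^2}{f},\qquad c=b+d=2p^kr+\frac{2r^2}{f}+fp^{2k}.$$ Then $(a,b,c)$ is an IDPT. Moreover, every IDPT $(a,b,c)$ with $c-b=f\cdot p^{2k}$ arises in this way from some such $r$.
   Context: A Diophantine Pythagorean Triangle (DPT) is a triple $(a,b,c)$ of positive integers with $a<b<c$ and $a^2+b^2=c^2$. An IDPT is a DPT with $\gcd(a,b,c)=1$. $\lceil x\rceil$ is the smallest integer $\ge x$. *)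

(* Defs.v *)
From Stdlib Require Import Reals ZArith.
From mathcomp Require Import all_boot.

Definition Rceil (x : R) : Z := (- Int_part (- x))%Z.

Definition DPT (a b c : nat) : Prop :=
  [/\ 0 < a, a < b, b < c & a ^ 2 + b ^ 2 = c ^ 2].

Definition IDPT (a b c : nat) : Prop :=
  DPT a b c /\ gcdn (gcdn a b) c = 1.

Definition fpar (p : nat) : nat := if p == 2 then 2 else 1.

Definition dpar (p k : nat) : nat := fpar p * p ^ (2 * k).

Definition admissible (p k r : nat) : Prop :=
  [/\ 0 < r,
      (Rceil (sqrt (INR (fpar p * dpar p k) / 2)) <= Z.of_nat r)%Z
    & (1 < dpar p k -> ~~ (p %| r))].

(* n = p^k r ; a = 2n + d ; b = 2n + 2 r^2 / f ; c = b + d.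
   (2 r^2 / f is an exact division since f ∈ {1,2}.) *)
Definition triple_a (p k r : nat) : nat := 2 * (p ^ k * r) + dpar p k.
Definition triple_b (p k r : nat) : nat := 2 * (p ^ k * r) + (2 * r ^ 2) %/ fpar p.
Definition triple_c (p k r : nat) : nat := triple_b p k r + dpar p k.

(* Main.v *)
Require Import Defs.
From Stdlib Require Import Reals ZArith Lra Lia.
From mathcomp Require Import all_boot zify.

Section Ceil.
Local Open Scope R_scope.
Lemma ceil_le (X r : nat) :
  (Rceil (sqrt (INR X / 2)) <= Z.of_nat r)%Z <-> (X <= 2 * r * r)%N.
Proof.
unfold Rceil, Int_part.
have hy : 0 <= INR X / 2 by have := pos_INR X; lra.
have hs := sqrt_pos (INR X / 2).
have hss := sqrt_sqrt _ hy.
set s := sqrt (INR X / 2) in hs hss *.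
destruct (archimed (- s)) as [h1 h2].
have hr := pos_INR r.
have eX : INR (2 * r * r) = 2 * INR r * INR r.
  by rewrite !mult_INR.
split.
- intro H.
  have H' : (1 - Z.of_nat r <= up (- s))%Z by lia.
  apply IZR_le in H'. rewrite minus_IZR -INR_IZR_INZ in H'.
  have hsr : s <= INR r by lra.
  have : INR X <= INR (2 * r * r) by rewrite eX; nra.
  move/INR_le => h. by apply/leP.
- move/leP => H. apply le_INR in H. rewrite eX in H.
  have hsr : s <= INR r by nra.
  have : IZR (- Z.of_nat r) < IZR (up (- s)).
    rewrite opp_IZR -INR_IZR_INZ. lra.
  move/lt_IZR. lia.
Qed.
End Ceil.

Lemma odd_ex (n : nat) : odd n -> exists i, n = 2 * i + 1.
Proof. move=> h. exists n./2. lia. Qed.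

Lemma gcd_one (a b c : nat) : 0 < c ->
  (forall q, prime q -> q %| a -> q %| b -> q %| c -> False) ->
  gcdn (gcdn a b) c = 1.
Proof.
move=> hc H.
have hg : 0 < gcdn (gcdn a b) c by rewrite gcdn_gt0 hc orbT.
case: (ltngtP (gcdn (gcdn a b) c) 1) => // hg1; first lia.
have hq := pdiv_prime hg1.
have hd := pdiv_dvd (gcdn (gcdn a b) c).
rewrite !dvdn_gcd in hd; case/andP: hd => /andP [h1 h2] h3.
by case: (H _ hq h1 h2 h3).
Qed.

Lemma gcd_one_dvd (a b c q : nat) : gcdn (gcdn a b) c = 1 -> prime q ->
  q %| a -> q %| b -> q %| c -> False.
Proof.
move=> hg hq h1 h2 h3.
have : q %| gcdn (gcdn a b) c by rewrite !dvdn_gcd h1 h2 h3.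
by rewrite hg Euclid_dvd1.
Qed.

Theorem theorem4 (p k : nat) (hp : prime p) :
  (forall r : nat, admissible p k r ->
     IDPT (triple_a p k r) (triple_b p k r) (triple_c p k r)) /\
  (forall a b c : nat, IDPT a b c -> c - b = dpar p k ->
     exists r : nat, admissible p k r /\
       [/\ a = triple_a p k r, b = triple_b p k r & c = triple_c p k r]).
Proof.
rewrite /admissible /IDPT /DPT /triple_c /triple_b /triple_a /dpar.
have hd : p ^ (2 * k) = p ^ k * p ^ k by rewrite -expnD addnn -mul2n.
rewrite hd.
set P := p ^ k.
have hP0 : 0 < P by rewrite expn_gt0 prime_gt0.
have hpP : 0 < k -> p %| P by move=> hk; apply: dvdn_exp.
have hP1 : k = 0 -> P = 1 by move=> hk0; rewrite /P hk0.
have hqP : forall q, prime q -> q %| P -> q = p.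
  move=> q hq; rewrite Euclid_dvdX // => /andP [hqp _].
  by apply/eqP; rewrite -dvdn_prime2.
have oP' : odd p -> odd P by move=> op; rewrite /P oddX op orbT.
clearbody P; clear hd.
case: (even_prime hp) => [ep | op].
-
  have hf : fpar p = 2 by rewrite /fpar ep.
  rewrite hf.
  have e2 : forall r, (2 * r ^ 2) %/ 2 = r ^ 2 by move=> r; rewrite mulKn.
  split.
  + move=> r [hr /ceil_le hX hnd].
    rewrite e2.
    have hodd : ~~ (2 %| r) by rewrite -ep; apply: hnd; lia.
    have hlt : 2 * (P * P) < r * r.
      have [j ej] : exists j, r = 2 * j + 1 by exists (r %/ 2); lia.
      rewrite ej in hX |- *; lia.
    split; first by (split; clear -hlt hP0; lia).
    apply: gcd_one; first lia.
    move=> q hq h1 h2 h3.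
    have hq2 : q = 2.
      have : q %| (2 * (P * r) + r ^ 2 + 2 * (P * P)) - (2 * (P * r) + r ^ 2).
        exact: dvdn_sub.
      rewrite addKn !Euclid_dvdM // => /orP [|/orP [] hh].
      * by rewrite dvdn_prime2 // => /eqP.
      * by rewrite (hqP _ hq hh).
      * by rewrite (hqP _ hq hh).
    subst q.
    move: h2; rewrite dvdn_addr; last by apply: dvdn_mulr.
    by rewrite Euclid_dvdX // (negbTE hodd).
  + move=> a b c [[ha hab hbc hpy] hg] hcb.
    have ec : c = b + 2 * (P * P) by lia.
    subst c.
    have eaa : a ^ 2 = (2 * P) ^ 2 * (b + P * P) by lia.
    have : (2 * P) ^ 2 %| a ^ 2 by rewrite eaa dvdn_mulr.
    rewrite dvdn_pexp2r // => /dvdnP [m em].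
    have emm : m * m = b + P * P.
      have h4 : 0 < (2 * P) ^ 2 by rewrite expn_gt0; lia.
      apply/eqP; rewrite -(eqn_pmul2l h4) -eaa em; apply/eqP; lia.
    have hmP : P < m.
      case: (ltnP P m) => // hm.
      have : m * m <= P * m by rewrite leq_mul2r hm orbT.
      lia.
    have [r er] : exists r, m = r + P by exists (m - P); lia.
    subst m a; clear eaa hpy hcb.
    exists r.
    split; last by rewrite e2; split; lia.
    split; [lia | apply/ceil_le; lia | ].
    move=> _; apply/negP; rewrite ep => /dvdnP [t et].
    apply: (gcd_one_dvd _ _ _ _ hg hp); rewrite ep.
    * apply/dvdnP; exists ((r + P) * P); lia.
    * apply/dvdnP; exists (2 * t * t + 2 * P * t); subst r; lia.
    * apply/dvdnP; exists (2 * t * t + 2 * P * t + P * P); subst r; lia.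
-
  have hf : fpar p = 1 by rewrite /fpar; case: eqP => // e; rewrite e in op.
  rewrite hf.
  have e1 : forall r, (2 * r ^ 2) %/ 1 = 2 * r ^ 2 by move=> r; rewrite divn1.
  have oP := oP' op.
  have hp2 : ~~ (p %| 2) by rewrite dvdn_prime2 //; apply/eqP => e; rewrite e in op.
  split.
  + move=> r [hr /ceil_le hX hnd].
    rewrite e1.
    have hlt : P * P < 2 * r * r.
      have [i ei] := odd_ex _ oP.
      move: hX; rewrite ei; clear; lia.
    split; first by (split; clear -hlt hP0; lia).
    apply: gcd_one; first lia.
    move=> q hq h1 h2 h3.
    have hpP' : p %| P.
      have : q %| (2 * (P * r) + 2 * r ^ 2 + 1 * (P * P)) - (2 * (P * r) + 2 * r ^ 2).
        exact: dvdn_sub.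
      rewrite addKn mul1n !Euclid_dvdM // => /orP [] hh; by rewrite -(hqP _ hq hh).
    have hqp : q = p.
      have : q %| (2 * (P * r) + 2 * r ^ 2 + 1 * (P * P)) - (2 * (P * r) + 2 * r ^ 2).
        exact: dvdn_sub.
      rewrite addKn mul1n !Euclid_dvdM // => /orP [] hh; exact: hqP.
    subst q.
    have hk : 0 < k.
      case: (posnP k) => // /hP1 e; rewrite e dvdn1 in hpP'.
      by move/eqP: hpP' => e'; rewrite e' in hp.
    have hpr : ~~ (p %| r).
      have hP1' : 1 < P := leq_trans (prime_gt1 hp) (dvdn_leq hP0 hpP').
      apply: hnd; rewrite mul1n; apply: (leq_trans hP1'); exact: leq_pmulr.
    move: h2; rewrite dvdn_addr; last by apply: dvdn_mull; apply: dvdn_mulr; exact: hpP.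
    by rewrite Euclid_dvdM // Euclid_dvdX // (negbTE hp2) (negbTE hpr).
  + move=> a b c [[ha hab hbc hpy] hg] hcb.
    have ec : c = b + 1 * (P * P) by lia.
    subst c.
    have eaa : a ^ 2 = P ^ 2 * (2 * b + P * P) by lia.
    have : P ^ 2 %| a ^ 2 by rewrite eaa dvdn_mulr.
    rewrite dvdn_pexp2r // => /dvdnP [m em].
    have emm : m * m = 2 * b + P * P.
      have h4 : 0 < P ^ 2 by rewrite expn_gt0; lia.
      apply/eqP; rewrite -(eqn_pmul2l h4) -eaa em; apply/eqP; lia.
    have om : odd m.
      have := divn_eq m 2; case: (ltnP (m %% 2) 1) => hm em2; last lia.
      exfalso. have e0 : m %% 2 = 0 by lia.
      rewrite e0 addn0 in em2. rewrite em2 in emm.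
      have [i ei] := odd_ex _ oP. rewrite ei in emm. clear -emm; lia.
    have hmP : P < m.
      case: (ltnP P m) => // hm.
      have : m * m <= P * m by rewrite leq_mul2r hm orbT.
      lia.
    have [r er] : exists r, m = 2 * r + P.
      exists ((m - P) %/ 2); clear -om oP hmP; lia.
    subst m a; clear eaa hpy hcb.
    exists r.
    split; last by rewrite e1; split; lia.
    split; [lia | apply/ceil_le; lia | ].
    move=> hd1; apply/negP => /dvdnP [t et].
    have hk : 0 < k by case: (posnP k) => // /hP1 e; rewrite e in hd1.
    have := hpP hk => /dvdnP [u eu].
    apply: (gcd_one_dvd _ _ _ _ hg hp).
    * apply/dvdnP; exists (u * (2 * r + P)); lia.
    * apply/dvdnP; exists (2 * t * r + 2 * u * r); lia.
    * apply/dvdnP; exists (2 * t * r + 2 * u * r + u * P); lia.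
Qed.
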